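(* Let $\mathcal{G}=(\mathcal{V},\mathcal{E})$ be an endotactic reaction network. Then there exists a source-only reaction network $\tilde{\mathcal{G}}=(\tilde{\mathcal{V}},\tilde{\mathcal{E}})$ such that $\mathcal{G}\sqsubseteq\tilde{\mathcal{G}}$ and the nodes of $\tilde{\mathcal{G}}$ are exactly the source nodes of $\mathcal{G}$. Therefore, every endotactic network is effectively source-only.
   Context: A reaction network (E-graph) $\mathcal{G}=(\mathcal{V},\mathcal{E})$ is a finite directed graph whose nodes are distinct elements of a finite set $Y\subset\mathbb{R}^d_{\ge 0}$, with $\mathcal{V}\neq\emptyset$, every node incident to at least one edge, and no edge from a node to itself. For an edge $e$, $\mathbf{s}(e)$ is its source node, $\mathbf{t}(e)$ its target, $\mathbf{v}(e)=\mathbf{t}(e)-\mathbf{s}(e)$. Given positive rate constants $\mathcal{K}=(k_e)$, $\mathcal{G}$ generates the system $\frac{d\mathbf{x}}{dt}=\mathbf{f}_{\mathcal{G}(\mathcal{K})}(\mathbf{x})=\sum_{e}k_e\mathbf{x}^{\mathbf{s}(e)}\mathbf{v}(e)$ ($\mathbf{x}^{\mathbf{y}}=\prod_i x_i^{y_i}$, $0^0=1$). $\mathcal{G}\sqsubseteq\tilde{\mathcal{G}}$ means: for every positive rate constants $\mathcal{K}$ for $\mathcal{G}$ there exist positive rate constants $\tilde{\mathcal{K}}$ for $\tilde{\mathcal{G}}$ with $\mathbf{f}_{\tilde{\mathcal{G}}(\tilde{\mathcal{K}})}=\mathbf{f}_{\mathcal{G}(\mathcal{K})}$ identically. $\mathcal{G}$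 is endotactic if for every $\mathbf{w}\in\mathbb{R}^d$ and $e_i\in\mathcal{E}$ with $\mathbf{w}\cdot\mathbf{v}(e_i)<0$ there exists $e_j\in\mathcal{E}$ with $\mathbf{w}\cdot(\mathbf{s}(e_j)-\mathbf{s}(e_i))<0$ and $\mathbf{w}\cdot\mathbf{v}(e_j)>0$. A network is source-only if every node that is the target of some edge is also the source of some edge. A polynomial dynamical system is source-only if it is generated (for some positive rate constants) by some source-only network; a network is effectively source-only if every system it generates is source-only. *)

(* Defs.v *)
From HB Require Import structures.
From mathcomp Require Import all_boot all_order all_algebra.
From mathcomp Require Import reals exp.
Set Implicit Arguments. Unset Strict Implicit. Unset Printing Implicit Defensive.
Import Order.TTheory GRing.Theory Num.Theory.
Local Open Scope ring_scope.

Section RN.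
Variables (R : realType) (d : nat).

Definition vec := 'rV[R]_d.
Definition edge := (vec * vec)%type.
Definition network := seq edge.

Definition src (e : edge) : vec := e.1.
Definition tgt (e : edge) : vec := e.2.
Definition reactv (e : edge) : vec := tgt e - src e.

Definition dotv (w v : vec) : R := \sum_(i < d) w 0 i * v 0 i.

Definition nonneg_vec (y : vec) : Prop := forall i : 'I_d, 0 <= y 0 i.

(* A reaction network (E-graph): finite edge list without duplicates, with
   nodes in R^d_{>=0}, no self loops, and nonempty (V nonempty and every node
   lies on an edge, nodes being exactly the endpoints of edges). *)
Definition is_network (G : network) : Prop :=
  [/\ uniq G, G <> [::],
      (forall e, e \in G -> src e != tgt e) &
      (forall e, e \in G -> nonneg_vec (src e) /\ nonneg_vec (tgt e))].

Definition nodes (G : network) : seq vec := map src G ++ map tgt G.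
Definition sources (G : network) : seq vec := map src G.

(* x^y = prod_i x_i^{y_i}, with powR satisfying 0^0 = 1 *)
Definition monom (x y : vec) : R := \prod_(i < d) powR (x 0 i) (y 0 i).

Definition rates_pos (G : network) (k : edge -> R) : Prop :=
  forall e, e \in G -> 0 < k e.

Definition field (G : network) (k : edge -> R) (x : vec) : vec :=
  \sum_(e <- G) (k e * monom x (src e)) *: reactv e.

Definition same_system (F1 F2 : vec -> vec) : Prop :=
  forall x, nonneg_vec x -> F1 x = F2 x.

Definition realized_by (G G' : network) : Prop :=
  forall k, rates_pos G k ->
    exists k', rates_pos G' k' /\ same_system (field G' k') (field G k).

Definition endotactic (G : network) : Prop :=
  forall (w : vec) (ei : edge), ei \in G -> dotv w (reactv ei) < 0 ->
    exists2 ej, ej \in G &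
      dotv w (src ej - src ei) < 0 /\ 0 < dotv w (reactv ej).

Definition source_only (G : network) : Prop :=
  forall e, e \in G -> exists2 e', e' \in G & src e' = tgt e.

Definition source_only_system (F : vec -> vec) : Prop :=
  exists G' k', [/\ is_network G', source_only G', rates_pos G' k' &
                   same_system (field G' k') F].

Definition effectively_source_only (G : network) : Prop :=
  forall k, rates_pos G k -> source_only_system (field G k).

End RN.

(* Main.v *)
Require Import Defs.
From HB Require Import structures.
From mathcomp Require Import all_boot all_order all_algebra.
From mathcomp Require Import reals exp.
From mathcomp Require Import ring lra.
From Stdlib Require Import ClassicalEpsilon.
Set Implicit Arguments. Unset Strict Implicit. Unset Printing Implicit Defensive.
Import Order.TTheory GRing.Theory Num.Theory.
Section Aux.
Local Open Scope ring_scope.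
Variables (R : realType) (d : nat).
Implicit Types (u v w : vec R d).

Lemma dotvDr w u v : dotv w (u + v) = dotv w u + dotv w v.
Proof. by rewrite /dotv -big_split; apply: eq_bigr => i _; rewrite mxE mulrDr. Qed.
Lemma dotvDl w u v : dotv (u + v) w = dotv u w + dotv v w.
Proof. by rewrite /dotv -big_split; apply: eq_bigr => i _; rewrite mxE mulrDl. Qed.
Lemma dotvZr w (c : R) v : dotv w (c *: v) = c * dotv w v.
Proof. by rewrite /dotv mulr_sumr; apply: eq_bigr => i _; rewrite mxE; ring. Qed.
Lemma dotvZl w (c : R) v : dotv (c *: v) w = c * dotv v w.
Proof. by rewrite /dotv mulr_sumr; apply: eq_bigr => i _; rewrite mxE; ring. Qed.
Lemma dotvNr w v : dotv w (- v) = - dotv w v.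
Proof. by rewrite -scaleN1r dotvZr mulN1r. Qed.
Lemma dotvNl w v : dotv (- v) w = - dotv v w.
Proof. by rewrite -scaleN1r dotvZl mulN1r. Qed.
Lemma dotvBr w u v : dotv w (u - v) = dotv w u - dotv w v.
Proof. by rewrite dotvDr dotvNr. Qed.
Lemma dotvBl w u v : dotv (u - v) w = dotv u w - dotv v w.
Proof. by rewrite dotvDl dotvNl. Qed.
Lemma dotv0r w : dotv w 0 = 0.
Proof. by rewrite -(scale0r 0) dotvZr mul0r. Qed.
Lemma dotv_sumr w (I : Type) (r : seq I) (F : I -> vec R d) :
  dotv w (\sum_(i <- r) F i) = \sum_(i <- r) dotv w (F i).
Proof.
elim: r => [|x r IH]; first by rewrite !big_nil dotv0r.
by rewrite !big_cons dotvDr IH.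
Qed.

Lemma dotv_self_neg v : v != 0 -> dotv (- v) v < 0.
Proof.
move=> nz; rewrite dotvNl oppr_lt0.
have [j hj] : exists j, v 0 j != 0.
  apply/existsP; apply: contraR nz; rewrite negb_exists => /forallP H.
  apply/eqP/rowP => j; rewrite mxE; exact/eqP/negbNE/H.
rewrite /dotv (bigD1 j) //=.
apply: ltr_pwDl; first by rewrite lt_def mulf_neq0 //= -expr2 sqr_ge0.
by apply: sumr_ge0 => i _; rewrite -expr2 sqr_ge0.
Qed.

Lemma farkas m : forall (a : nat -> vec R d) (b : vec R d),
  (exists l : nat -> R, (forall i, 0 <= l i) /\ b = \sum_(i < m) l i *: a i) \/
  (exists w, (forall i, (i < m)%N -> 0 <= dotv w (a i)) /\ dotv w b < 0).
Proof.
elim: m => [|m IH] a b.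
  have [->|nz] := eqVneq b 0.
    by left; exists (fun _ => 0); split => //; rewrite big_ord0.
  by right; exists (- b); split => //; exact: dotv_self_neg.
case: (IH a b) => [[l [l0 eb]]|[w [wa wb]]].
  left; exists (fun i => if (i < m)%N then l i else 0); split.
    by move=> i; case: ifP.
  rewrite big_ord_recr /= ltnn scale0r addr0 eb.
  by apply: eq_bigr => i _; rewrite ltn_ord.
have [al|al] := leP 0 (dotv w (a m)).
  right; exists w; split => // i; rewrite ltnS leq_eqVlt => /orP[/eqP->//|]; exact: wa.
set al' := dotv w (a m) in al.
have aln : al' != 0 by rewrite lt_eqF.
pose a' i := a i - (dotv w (a i) / al') *: a m.
pose b' := b - (dotv w b / al') *: a m.
case: (IH a' b') => [[l [l0 eb]]|[w' [wa' wb']]].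
  left.
  pose c := (dotv w b - \sum_(i < m) l i * dotv w (a i)) / al'.
  exists (fun i => if (i < m)%N then l i else c); split.
    move=> i; case: ifP => _ //; rewrite /c.
    apply: ltW; rewrite ltr_ndivlMr // mul0r subr_lt0.
    apply: (lt_le_trans wb); apply: sumr_ge0 => j _; rewrite mulr_ge0 //; exact: wa.
  rewrite big_ord_recr /= ltnn.
  under eq_bigr => i _ do rewrite ltn_ord.
  have -> : b = b' + (dotv w b / al') *: a m by rewrite /b' subrK.
  rewrite eb /a'.
  have -> : \sum_(i < m) l i *: (a i - (dotv w (a i) / al') *: a m) =
     \sum_(i < m) l i *: a i - (\sum_(i < m) l i * (dotv w (a i) / al')) *: a m.
    rewrite scaler_suml -sumrB; apply: eq_bigr => i _.
    by rewrite scalerDr scalerN scalerA.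
  rewrite /c.
  rewrite -addrA; congr (_ + _).
  rewrite -scaleNr -scalerDl; congr (_ *: _).
  rewrite mulrBl mulr_suml -sumrN addrC; congr (_ + _).
  by rewrite mulr_suml -sumrN; apply: eq_bigr => i _; rewrite mulrA.
right.
exists (w' - (dotv w' (a m) / al') *: w); split.
  move=> i; rewrite ltnS leq_eqVlt => /orP[/eqP->|im].
    rewrite dotvBl dotvZl -/al' mulfVK // subrr //.
  move: (wa' i im); rewrite /a' dotvBl dotvBr !dotvZl !dotvZr -/al'.
  suff -> : dotv w' (a i) - dotv w (a i) / al' * dotv w' (a m) =
            dotv w' (a i) - dotv w' (a m) / al' * dotv w (a i) by [].
  by ring.
move: wb'; rewrite /b' dotvBl dotvBr !dotvZl !dotvZr -/al'.
suff -> : dotv w b / al' * dotv w' (a m) = dotv w' (a m) / al' * dotv w b by [].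
by ring.
Qed.
End Aux.
Section Main.
Local Open Scope ring_scope.
Lemma main_part (R : realType) (d : nat) (G : network R d) :
  is_network G -> endotactic G ->
  (exists G' : network R d,
      [/\ is_network G', source_only G', realized_by G G' &
          forall y : vec R d, (y \in nodes G') = (y \in sources G)]).
Proof.
move=> [uG nG nloop nnG] endo.
set S := undup (sources G).
have uS : uniq S by exact: undup_uniq.
have srcS : forall e, e \in G -> src e \in S.
  by move=> e eG; rewrite mem_undup; apply: map_f.
have Ssrc : forall y, y \in S -> exists2 e, e \in G & y = src e.
  by move=> y; rewrite mem_undup => /mapP.
have key : forall e, exists l : nat -> R, (forall i, 0 <= l i) /\ (e \in G ->
    reactv e = \sum_(i < size S) l i *: (nth 0 S i - src e)).
  move=> e; case: (boolP (e \in G)) => eG; last by exists (fun _ => 0); split.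
  case: (farkas (size S) (fun i => nth 0 S i - src e) (reactv e)) =>
     [[l [l0 h]]|[w [wa wb]]].
    by exists l.
  exists (fun _ => 0); split => // _; exfalso; have [ej ejG [h1 _]] := endo w e eG wb.
  move: (srcS ej ejG) => /(nthP 0) [i iS ei].
  by move: (wa i iS); rewrite ei leNgt h1.
pose L e := proj1_sig (constructive_indefinite_description _ (key e)).
have HL : forall e, (forall i, 0 <= L e i) /\ (e \in G ->
    reactv e = \sum_(i < size S) L e i *: (nth 0 S i - src e)).
  by move=> e; exact: (proj2_sig (constructive_indefinite_description _ (key e))).
pose lam e y := if y == src e then 0 else L e (index y S).
have lam0 : forall e y, 0 <= lam e y.
  by move=> e y; rewrite /lam; case: eqP => // _; apply: (HL e).1.
have lamE : forall e, e \in G -> reactv e = \sum_(y <- S) lam e y *: (y - src e).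
  move=> e eG; rewrite (HL e).2 // (big_nth 0) big_mkord; apply: eq_bigr => i _.
  rewrite /lam; case: eqP => [->|_]; first by rewrite subrr !scaler0.
  by rewrite index_uniq.
have lamS : forall e, lam e (src e) = 0 by move=> e; rewrite /lam eqxx.
have factA : forall e, e \in G -> exists2 y, y \in S & 0 < lam e y.
  move=> e eG; case: (boolP (has (fun y => 0 < lam e y) S)) => [/hasP[y yS hy]|/hasPn H].
    by exists y.
  exfalso; have := nloop e eG; apply/negP; rewrite negbK.
  have : reactv e = 0.
    rewrite lamE // big1_seq // => y /andP[_ yS].
    have := H y yS; rewrite lt_def lam0 andbT negbK => /eqP->; exact: scale0r.
  by rewrite /reactv => /eqP; rewrite subr_eq0 eq_sym.
pose c (p : vec R d * vec R d) := \sum_(e <- G | src e == p.1) lam e p.2.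
pose AP := [seq (s, y) | s <- S, y <- S].
pose G' := [seq p <- AP | 0 < c p].
have factB : forall e y, e \in G -> y \in S -> 0 < lam e y -> (src e, y) \in G'.
  move=> e y eG yS hy; rewrite mem_filter; apply/andP; split; last first.
    by apply: allpairs_f => //; apply: srcS.
  rewrite lt_def sumr_ge0 ?andbT; last by move=> *; apply: lam0.
  rewrite psumr_neq0; last by move=> *; apply: lam0.
  by apply/hasP; exists e => //=; rewrite eqxx hy.
have factC : forall p, p \in G' -> [/\ p.1 \in S, p.2 \in S & 0 < c p].
  move=> p; rewrite mem_filter => /andP[cp /allpairsP[[s y] [/= sS yS pe]]].
  by rewrite pe in cp *; split.
have factD : forall p, 0 < c p -> p.1 != p.2.
  move=> p; apply: contraTneq => e12; rewrite /c big1 ?ltxx // => e /eqP h.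
  by rewrite -e12 -h lamS.
have G'ne : G' <> [::].
  have [e0 e0G] : exists e0, e0 \in G.
    by move: nG; case E: G => [//|e0 G0] _; exists e0; rewrite inE eqxx.
  have [y yS hy] := factA e0 e0G.
  by move=> h; have := factB e0 y e0G yS hy; rewrite h.
exists G'; split.
- split => //.
  + rewrite filter_uniq // allpairs_uniq // => [[? ?] [? ?]] _ _ //.
  + by move=> p /factC [_ _ cp]; exact: factD.
  + move=> p /factC [h1 h2 _]; rewrite /src /tgt; split.
      by have [e eG ->] := Ssrc _ h1; exact: (nnG e eG).1.
    by have [e eG ->] := Ssrc _ h2; exact: (nnG e eG).1.
- move=> p /factC [_ h2 _]; have [e eG ep] := Ssrc _ h2.
  have [y yS hy] := factA e eG.
  by exists (src e, y); [exact: factB | rewrite /tgt ep].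
- move=> k kpos.
  pose kk (p : vec R d * vec R d) := \sum_(e <- G | src e == p.1) k e * lam e p.2.
  have c0 : forall p, ~~ (0 < c p) -> forall e, e \in G -> src e == p.1 -> lam e p.2 = 0.
    move=> p ncp e eG se.
    have cz : c p == 0.
      rewrite eq_le sumr_ge0 ?andbT; first by rewrite leNgt.
      by move=> *; apply: lam0.
    move: cz; rewrite psumr_eq0; last by move=> *; apply: lam0.
    by move/allP/(_ e eG); rewrite se /= => /eqP.
  exists kk; split.
  + move=> p /factC [_ _ cp].
    have : c p != 0 by rewrite gt_eqF.
    rewrite psumr_neq0; last by move=> *; apply: lam0.
    move=> /hasP [e eG /andP [se hl]].
    have kk0 : forall e', (e' \in G) && (src e' == p.1) -> 0 <= k e' * lam e' p.2.
      by move=> e' /andP [e'G _]; apply: mulr_ge0; [apply: ltW; apply: kpos | apply: lam0].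
    rewrite /kk big_seq_cond lt_def sumr_ge0 ?andbT //.
    rewrite psumr_neq0 //; apply/hasP; exists e => //.
    by rewrite eG se mulr_gt0 // kpos.
  + move=> x _; rewrite /field /G' big_filter big_mkcond /=.
    rewrite (eq_bigr (fun p => (kk p * monom x (src p)) *: reactv p)); last first.
      move=> p _; case: ifP => // /negbT ncp.
      rewrite /kk big1_seq ?mul0r ?scale0r // => e /andP [se eG].
      by rewrite (c0 p ncp e eG se) mulr0.
    rewrite big_allpairs.
    rewrite (eq_bigr (fun s => \sum_(e <- G) \sum_(y <- S)
      (if src e == s then (k e * lam e y * monom x (src e)) *: (y - src e) else 0))); last first.
      move=> s _; rewrite exchange_big /=; apply: eq_bigr => y _.
      rewrite /kk /reactv mulr_suml scaler_suml big_mkcond /=; apply: eq_bigr => e _.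
      by case: eqP => [<-|].
    rewrite exchange_big /= big_seq [RHS]big_seq; apply: eq_bigr => e eG.
    rewrite (big_rem (src e)) ?srcS //= eqxx.
    rewrite [X in _ + X]big1_seq ?addr0; last first.
      move=> s /andP [_ sr]; apply: big1 => y _; case: eqP => // es.
      by move: sr; rewrite -es mem_rem_uniqF.
    rewrite (lamE e eG) scaler_sumr; apply: eq_bigr => y _.
    by rewrite scalerA mulrAC.
- move=> y; rewrite /nodes mem_cat /sources; apply/idP/idP.
    case/orP => /mapP [p /factC [h1 h2 _] ->]; rewrite -mem_undup; [exact: h1 | exact: h2].
  move/mapP => [e eG ->]; have [y' yS hy] := factA e eG.
  by apply/orP; left; apply/mapP; exists (src e, y') => //; exact: factB.
Qed.
End Main.

Theorem lemma4 (R : realType) (d : nat) (G : network R d) :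
  is_network G -> endotactic G ->
  (exists G' : network R d,
      [/\ is_network G', source_only G', realized_by G G' &
          forall y : vec R d, (y \in nodes G') = (y \in sources G)])
  /\ effectively_source_only G.
Proof.
move=> nG eG; have [G' [nG' soG' rG nodesG']] := main_part nG eG.
split; first by exists G'.
move=> k kpos; have [k' [kp' ss]] := rG k kpos.
by exists G', k'; split.
Qed.
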